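(* Let $(Q,\star)$ be a left-non-degenerate weak RC-system on a quiver $Q$ over $\Lambda$. Then its completion $(\hat Q,\hat\star)$ is a unital weak RC-system, whose unit family is the family $\{\epsilon_\lambda\}_{\lambda\in\Lambda}$ of inserted loops.
   Context: A weak RC-system $(Q,\star)$ is a quiver with partial operation such that: $x\star y$ defined only if $\mathfrak{s}(x)=\mathfrak{s}(y)$; if $x\star y$ is defined then $y\star x$ is defined, $\mathfrak{s}(x\star y)=\mathfrak{t}(x)$, $\mathfrak{s}(y\star x)=\mathfrak{t}(y)$, $\mathfrak{t}(x\star y)=\mathfrak{t}(y\star x)$; and if $x\star y$, $x\star z$, $(x\star y)\star(x\star z)$ are defined then $y\star z$, $(y\star x)\star(y\star z)$ are defined and $(x\star y)\star(x\star z)=(y\star x)\star(y\star z)$. Left-non-degenerate: each $x\star\cdot\colon Q(\mathfrak{s}(x),\Lambda)\to Q(\mathfrak{t}(x),\Lambda)$ is a bijection. The completion $(\hat Q,\hat\star)$: $\hat Q=Q\cup\{\epsilon_\lambda\mid\lambda\in\Lambda\}$ with new loops $\epsilon_\lambda\colon\lambda\to\lambda$ not in $Q$, and $\epsilon_{\mathfrak{s}(y)}\hat\star y:=y$, $x\hat\star\epsilon_{\mathfrak{s}(x)}:=\epsilon_{\mathfrak{t}(x)}$, $x\hat\star x:=\epsilon_{\mathfrak{t}(x)}$, $x\hat\star y:=x\star y$ in all remaining cases. A unit family of a weak RC-system is a family of loops $\epsilon_\lambda\in Q(\lambda,\lambda)$ such that, for all $x$, $x\star\epsilon_{\mathfrak{s}(x)}=\epsilon_{\mathfrak{t}(x)}$,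 $\epsilon_{\mathfrak{s}(x)}\star x=x$ and $x\star x=\epsilon_{\mathfrak{t}(x)}$ (all defined). The system is unital if it has a unit family and for all $x,y$ with common target $\mu$, $x\star y=y\star x=\epsilon_\mu$ implies $x=y$. *)

(* Defs.v *)
From Stdlib Require Import ClassicalEpsilon.

Definition weak_RC {V A : Type} (s t : A -> V) (op : A -> A -> option A) : Prop :=
  (forall x y xy, op x y = Some xy -> s x = s y) /\
  (forall x y xy, op x y = Some xy ->
     exists yx, op y x = Some yx /\ s xy = t x /\ s yx = t y /\ t xy = t yx) /\
  (forall x y z xy xz w,
     op x y = Some xy -> op x z = Some xz -> op xy xz = Some w ->
     exists yx yz, op y x = Some yx /\ op y z = Some yz /\ op yx yz = Some w).

Definition left_nondegenerate {V A : Type} (s t : A -> V) (op : A -> A -> option A)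
  : Prop :=
  forall x,
    (forall y, s y = s x -> exists z, op x y = Some z /\ s z = t x) /\
    (forall y1 y2 z, s y1 = s x -> s y2 = s x ->
        op x y1 = Some z -> op x y2 = Some z -> y1 = y2) /\
    (forall z, s z = t x -> exists y, s y = s x /\ op x y = Some z).

Definition unit_family {V A : Type} (s t : A -> V) (op : A -> A -> option A)
  (eps : V -> A) : Prop :=
  (forall l, s (eps l) = l /\ t (eps l) = l) /\
  (forall x, op x (eps (s x)) = Some (eps (t x))) /\
  (forall x, op (eps (s x)) x = Some x) /\
  (forall x, op x x = Some (eps (t x))).

Definition unital_with {V A : Type} (s t : A -> V) (op : A -> A -> option A)
  (eps : V -> A) : Prop :=
  weak_RC s t op /\ unit_family s t op eps /\
  (forall x y, t x = t y ->
     op x y = Some (eps (t x)) -> op y x = Some (eps (t x)) -> x = y).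

(* The completion: hat Q = Q + Lambda, inr l being the new loop eps_l. *)
Definition hat_src {V A : Type} (s : A -> V) (u : A + V) : V :=
  match u with inl x => s x | inr l => l end.

Definition hat_tgt {V A : Type} (t : A -> V) (u : A + V) : V :=
  match u with inl x => t x | inr l => l end.

Definition hat_eps {V A : Type} (l : V) : A + V := inr l.

Definition hat_op {V A : Type} (s t : A -> V) (op : A -> A -> option A)
  (u v : A + V) : option (A + V) :=
  match u, v with
  | inr l, _ =>
      if excluded_middle_informative (hat_src s v = l) then Some v else None
  | inl x, inr l =>
      if excluded_middle_informative (l = s x) then Some (inr (t x)) else None
  | inl x, inl y =>
      if excluded_middle_informative (x = y) then Some (inr (t x))
      else option_map inl (op x y)
  end.

(* Main.v *)
Require Import Defs.
From Stdlib Require Import ClassicalEpsilon.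

Ltac dem := repeat match goal with
  | H : context [excluded_middle_informative ?P] |- _ =>
      destruct (excluded_middle_informative P); subst
  | |- context [excluded_middle_informative ?P] =>
      destruct (excluded_middle_informative P); subst
  end.

Section S.
Context (V A : Type) (s t : A -> V) (op : A -> A -> option A).
Hypothesis (HRC : weak_RC s t op) (HND : left_nondegenerate s t op).
Ltac hs := simpl in *; repeat match goal with
   |- context [excluded_middle_informative ?P] => destruct (excluded_middle_informative P) end;
  try congruence;
  repeat match goal with H : op _ _ = Some _ |- _ => rewrite H end; simpl; try congruence.


Lemma hat1 u v w : hat_op s t op u v = Some w -> hat_src s u = hat_src s v.
Proof.
  destruct HRC as [H1 [H2 H3]].
  destruct u as [x|l], v as [y|l']; simpl; intros H; dem; try discriminate; auto.
  destruct (op x y) eqn:E; simpl in H; try discriminate; eauto.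
Qed.

Lemma hat2 u v w : hat_op s t op u v = Some w ->
  exists vu, hat_op s t op v u = Some vu /\ hat_src s w = hat_tgt t u /\
    hat_src s vu = hat_tgt t v /\ hat_tgt t w = hat_tgt t vu.
Proof.
  destruct HRC as [H1 [H2 H3]].
  destruct u as [x|l], v as [y|l']; simpl; intros H.
  - destruct (excluded_middle_informative (x = y)).
    + subst. injection H as <-. exists (inr (t y)). simpl. dem; auto; try congruence.
    + destruct (op x y) eqn:E; simpl in H; try discriminate. injection H as <-.
      destruct (H2 _ _ _ E) as [yx [E' [? [? ?]]]].
      exists (inl yx). simpl. dem; [congruence|]. rewrite E'; simpl; auto.
  - dem; try discriminate; try congruence. injection H as <-. exists (inl x). simpl. dem; auto; congruence.
  - dem; try discriminate; try congruence. injection H as <-. exists (inr (t y)). simpl. dem; auto; congruence.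
  - dem; try discriminate; try congruence. injection H as <-. eexists. simpl. dem; auto; congruence.
Qed.

Lemma hat3 u v w a b c : hat_op s t op u v = Some a -> hat_op s t op u w = Some b ->
  hat_op s t op a b = Some c ->
  exists e f, hat_op s t op v u = Some e /\ hat_op s t op v w = Some f /\
    hat_op s t op e f = Some c.
Proof.
  intros Ha Hb Hc.
  pose proof (hat1 _ _ _ Ha) as Sa. pose proof (hat1 _ _ _ Hb) as Sb.
  destruct (hat2 _ _ _ Ha) as [e [He [Sa1 [Se1 Te1]]]].
  destruct (hat2 _ _ _ Hb) as [b' [Hb' [Sb1 [Sb2 Tb1]]]].
  destruct u as [x|l].
  2:{
    simpl in Ha, Hb. dem; try discriminate; try congruence.
    injection Ha as <-. injection Hb as <-.
    destruct (hat2 _ _ _ Hc) as [cw [_ [Sc _]]].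
    exists e. exists c. split; [exact He|]. split; [exact Hc|].
    destruct v as [y|l'].
    - simpl in He, Sc. dem; try discriminate; try congruence. injection He as <-.
      simpl. dem; congruence.
    - simpl in He. dem; try discriminate; try congruence. injection He as <-.
      simpl in *. dem; try congruence. }
  destruct HRC as [H1 [H2 H3]].
  destruct v as [y|l].
  2:{ simpl in Ha, He, Sa. dem; try discriminate; try congruence.
      injection Ha as <-. injection He as <-.
      simpl in Hc. dem; try discriminate; try congruence. injection Hc as <-.
      exists (inl x), w. split; [simpl; dem; congruence|]. split; [simpl in Sb |- *; dem; congruence|].
      exact Hb. }
  destruct w as [z|l].
  2:{ simpl in Hb, Sb, Sa. dem; try discriminate; try congruence. injection Hb as <-.
      exists e, (inr (t y)). split; [exact He|]. split; [simpl; dem; congruence|].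
      simpl in Ha. destruct (excluded_middle_informative (x = y)).
      - subst. injection Ha as <-. simpl in He. dem; try congruence;
        injection He as <-; simpl in Hc |- *; dem; congruence.
      - destruct (op x y) eqn:E; simpl in Ha; try discriminate. injection Ha as <-.
        simpl in Hc. dem; try congruence. injection Hc as <-.
        destruct e as [e|le]; simpl in *; dem; try congruence. }
  simpl in Ha, Hb, He.
  destruct (excluded_middle_informative (x = y)) as [Exy|Nxy].
  { subst y. injection Ha as <-. destruct (excluded_middle_informative (x = x)) as [_|]; [|congruence]. injection He as <-.
    exists (inr (t x)), b. split; [simpl; destruct (excluded_middle_informative (x = x)); congruence|]. split; [exact Hb|].
    simpl in Hc |- *. exact Hc. }
  destruct (op x y) as [xy|] eqn:Exy; simpl in Ha; try discriminate. injection Ha as <-.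
  destruct (excluded_middle_informative (y = x)) as [|_]; [congruence|].
  destruct (op y x) as [yx|] eqn:Eyx; simpl in He; try discriminate. injection He as <-.
  destruct (excluded_middle_informative (x = z)) as [Exz|Nxz].
  { subst z. injection Hb as <-. simpl in Hc. dem; try congruence. injection Hc as <-.
    exists (inl yx), (inl yx). split; [hs|]. split.
    - simpl. dem; try congruence. rewrite Eyx. reflexivity.
    - simpl. dem; try congruence. simpl in *. congruence. }
  destruct (op x z) as [xz|] eqn:Exz; simpl in Hb; try discriminate. injection Hb as <-.
  destruct (excluded_middle_informative (y = z)) as [Eyz|Nyz].
  { subst z. rewrite Exy in Exz. injection Exz as <-.
    simpl in Hc. dem; try congruence. injection Hc as <-.
    exists (inl yx), (inr (t y)). split; [hs|]. split.
    - simpl. dem; congruence.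
    - simpl in *. dem; congruence. }
  simpl in Hc. destruct (excluded_middle_informative (xy = xz)) as [Eq|Neq].
  { exfalso. subst xz. apply Nyz.
    destruct (HND x) as [_ [Hinj _]].
    apply (Hinj y z xy); try assumption; symmetry; eauto. }
  destruct (op xy xz) as [w|] eqn:Ew; simpl in Hc; try discriminate. injection Hc as <-.
  destruct (H3 _ _ _ _ _ _ Exy Exz Ew) as [yx' [yz [Eyx' [Eyz Eyw]]]].
  rewrite Eyx in Eyx'. injection Eyx' as <-.
  exists (inl yx), (inl yz). split; [hs|]. split.
  - simpl. dem; try congruence. rewrite Eyz. reflexivity.
  - simpl. destruct (excluded_middle_informative (yx = yz)) as [Eq2|_].
    + exfalso. subst yz. apply Nxz.
      destruct (HND y) as [_ [Hinj _]].
      pose proof (H1 _ _ _ Exy). pose proof (H1 _ _ _ Exz).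
      apply (Hinj x z yx); try assumption; congruence.
    + rewrite Eyw. reflexivity.
Qed.
End S.

Theorem lemma3p8 (V A : Type) (s t : A -> V) (op : A -> A -> option A) :
  weak_RC s t op -> left_nondegenerate s t op ->
  unital_with (hat_src s) (hat_tgt t) (hat_op s t op) (@hat_eps V A).
Proof.
  intros HRC HND. split; [|split].
  - split; [|split].
    + exact (hat1 V A s t op HRC).
    + exact (hat2 V A s t op HRC).
    + exact (hat3 V A s t op HRC HND).
  - unfold hat_eps. split; [|split; [|split]].
    + intros l; simpl; auto.
    + intros [x|l]; simpl; dem; congruence.
    + intros [x|l]; simpl; dem; congruence.
    + intros [x|l]; simpl; dem; congruence.
  - unfold hat_eps. intros [x|l] [y|l'] Ht H H'; simpl in *; dem; try congruence.
    destruct (op x y); simpl in H; discriminate.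
Qed.
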